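(* Let $T$ be a bounded linear operator on a complex separable infinite-dimensional Hilbert space $\mathcal{H}$ admitting a $\mathbb{T}$-eigenvector field $E$ which is $\alpha$-H\''olderian for some $\alpha\in(0,1]$, and let $R$ be the operator defined from $E$ in the context. There exists a positive constant $C(E,\alpha)$ depending only on $E$ and $\alpha$ such that for all $x,y\in\mathcal{H}$, $$|\langle RT^{*n}x,y\rangle|\le\frac{C(E,\alpha)\,\|x\|\,\|y\|}{n^{\alpha}}$$ for every positive integer $n$.
   Context: The inner product is linear in the second variable, conjugate-linear in the first. $\mathbb{T}$ is the unit circle, $\mu$ normalized Lebesgue measure. A $\mathbb{T}$-eigenvector field is a bounded map $E:\mathbb{T}\to\mathcal{H}$ with $TE(\lambda)=\lambda E(\lambda)$ for all $\lambda$; it is $\alpha$-H\''olderian if there is $C(E)>0$ with $\|E(e^{i\theta})-E(e^{i\theta'})\|\le C(E)|\theta-\theta'|^{\alpha}$ for all $\theta,\theta'\in[0,2\pi)$. $K:L^2(\mathbb{T},\mu)\to\mathcal{H}$, $Kf=\int f(\lambda)E(\lambda)\,d\mu(\lambda)$, and $R=KK^*$; equivalently $\langle RT^{*n}x,y\rangle=\int_{\mathbb{T}}\lambda^n\langle x,E(\lambda)\rangle\overline{\langle y,E(\lambda)\rangle}\,d\mu(\lambda)$. *)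

(* Defs.v *)
From HB Require Import structures.
From mathcomp Require Import all_boot all_order all_algebra.
From mathcomp Require Import all_classical all_reals all_analysis.
From mathcomp Require Import complex.

Set Implicit Arguments.
Unset Strict Implicit.
Unset Printing Implicit Defensive.
Import Order.TTheory GRing.Theory Num.Theory.
Local Open Scope ring_scope.
Local Open Scope complex_scope.

Section Defs.
Variable R : realType.
Local Notation C := R[i].

Definition cmod (z : C) : R := Num.sqrt (complex.Re z ^+ 2 + complex.Im z ^+ 2).

Definition expi (t : R) : C := cos t +i* sin t.

(* inner-product-space structure on an abstract complex vector space H;
   the inner product is conjugate-linear in the first variable and
   linear in the second one. *)
Variable H : lmodType C.

Definition is_inner_product (ip : H -> H -> C) : Prop :=
  [/\ (forall x y z : H, forall a : C, ip x (a *: y + z) = a * ip x y + ip x z),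
      (forall x y : H, ip y x = conjc (ip x y)),
      (forall x : H, complex.Im (ip x x) = 0 /\ 0 <= complex.Re (ip x x)) &
      (forall x : H, ip x x = 0 -> x = 0)].

Definition hnorm (ip : H -> H -> C) (x : H) : R := Num.sqrt (complex.Re (ip x x)).

Definition ip_complete (ip : H -> H -> C) : Prop :=
  forall u : nat -> H,
    (forall e : R, 0 < e -> exists N : nat, forall m n : nat,
        (N <= m)%N -> (N <= n)%N -> hnorm ip (u m - u n) < e) ->
    exists l : H, forall e : R, 0 < e -> exists N : nat, forall n : nat,
        (N <= n)%N -> hnorm ip (u n - l) < e.

Definition ip_separable (ip : H -> H -> C) : Prop :=
  exists d : nat -> H, forall (x : H) (e : R), 0 < e ->
    exists n : nat, hnorm ip (x - d n) < e.

Definition infinite_dimensional : Prop :=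
  forall n : nat, exists v : 'I_n -> H,
    forall c : 'I_n -> C, \sum_(i < n) c i *: v i = 0 -> forall i, c i = 0.

Definition separable_inf_dim_hilbert (ip : H -> H -> C) : Prop :=
  [/\ is_inner_product ip, ip_complete ip, ip_separable ip & infinite_dimensional].

Definition bounded_linear (ip : H -> H -> C) (T : H -> H) : Prop :=
  linear T /\ exists M : R, forall x : H, hnorm ip (T x) <= M * hnorm ip x.

Definition is_adjoint (ip : H -> H -> C) (T Tstar : H -> H) : Prop :=
  forall x y : H, ip (T x) y = ip x (Tstar y).

Definition unit_circle : set C := [set l | cmod l = 1].

Definition T_eigenvector_field (ip : H -> H -> C) (T : H -> H) (E : C -> H) : Prop :=
  (exists M : R, forall l, unit_circle l -> hnorm ip (E l) <= M) /\
  (forall l, unit_circle l -> T (E l) = l *: E l).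

Definition holderian (ip : H -> H -> C) (E : C -> H) (alpha : R) : Prop :=
  exists CE : R, 0 < CE /\
    forall t t' : R, 0 <= t < 2 * pi -> 0 <= t' < 2 * pi ->
      hnorm ip (E (expi t) - E (expi t')) <= CE * `|t - t'| `^ alpha.

End Defs.

(* integral of a complex-valued function on the unit circle with respect to
   normalized Lebesgue measure mu, parametrized by lambda = e^{i theta},
   theta in [0, 2pi), computed on real and imaginary parts *)
Definition circle_integral (R : realType) (f : R[i] -> R[i]) : R[i] :=
  ((2 * pi)^-1 * \int[lebesgue_measure]_(t in `[0, 2 * pi[%classic) complex.Re (f (expi t)))
  +i* ((2 * pi)^-1 * \int[lebesgue_measure]_(t in `[0, 2 * pi[%classic) complex.Im (f (expi t))).

(* R = K K^*, where K f = \int f(l) E(l) dmu(l): characterized (weakly) by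
   <R z, y> = \int <z, E(l)> conj <y, E(l)> dmu(l)  for all z, y. *)
Definition is_KKstar (R : realType) (H : lmodType R[i]) (ip : H -> H -> R[i])
    (E : R[i] -> H) (Rop : H -> H) : Prop :=
  linear Rop /\
  forall z y : H,
    ip (Rop z) y = circle_integral (fun l => ip z (E l) * conjc (ip y (E l))).

(* Main.v *)
Require Import Defs.
From HB Require Import structures.
From mathcomp Require Import all_boot all_order all_algebra.
From mathcomp Require Import all_classical all_reals all_analysis.
From mathcomp Require Import complex.
Import Order.TTheory GRing.Theory Num.Theory.
From mathcomp Require Import measurable_realfun ring lra.
Import numFieldNormedType.Exports.
Local Open Scope ring_scope.
Section Aux.
Local Open Scope classical_set_scope.
Variable R : realType.
Notation mu := (@lebesgue_measure R).


Lemma holder_cont (D : set R) (g : R -> R) (K a : R) : 0 < a ->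
  (forall t s, D t -> D s -> `|g t - g s| <= K * `|t - s| `^ a) ->
  {within D, continuous g}.
Proof.
move=> a0 hg; apply/subspace_continuousP => x Dx.
apply/cvgrPdist_lt => e e0.
have K1 : 0 < `|K| + 1 by rewrite ltr_wpDl.
pose d := (e / (`|K| + 1)) `^ a^-1.
have d0 : 0 < d by rewrite powR_gt0 // divr_gt0.
rewrite /within /=; apply/nbhs_ballP; exists d => // t /= xt Dt.
rewrite -ball_normE /= in xt.
apply: (le_lt_trans (hg x t Dx Dt)).
have hp : `|x - t| `^ a < e / (`|K| + 1).
  have -> : e / (`|K| + 1) = d `^ a.
    by rewrite /d -powRrM mulVf ?gt_eqF // powRr1 // ltW // divr_gt0.
  by apply: gt0_ltr_powR => //; rewrite nnegrE ltW.
apply: (le_lt_trans (ler_wpM2r (powR_ge0 _ _) (ler_norm K))).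
apply: (le_lt_trans (ler_wpM2l (normr_ge0 K) (ltW hp))).
rewrite mulrA ltr_pdivrMr // mulrDr mulr1 mulrC ltrDl //.
Qed.

Lemma mb_int (g : R -> R) (u v M : R) : measurable_fun `[u, v[ g ->
  (forall t, u <= t < v -> `|g t| <= M) -> mu.-integrable `[u, v[ (EFin \o g).
Proof.
move=> mg bg; apply: measurable_bounded_integrable => //.
- have := lebesgue_measure_itv `[u, v[%R; rewrite /= => ->.
  by case: ifP => _ //=; rewrite ltry.
- rewrite /bounded_near; near=> N.
  have MN : M <= N by near: N; apply: nbhs_pinfty_ge; exact: num_real.
  move=> x /= Ax; apply: (le_trans (bg x _)) => //.
Unshelve. all: by end_near. Qed.


Lemma cont_int_co (g : R -> R) (u v : R) : continuous g ->
  mu.-integrable `[u, v[ (EFin \o g).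
Proof.
move=> cg.
have icc : mu.-integrable `[u, v] (EFin \o g).
  by apply: continuous_compact_integrable; [exact: segment_compact | exact: continuous_subspaceT].
by apply: integrableS icc => //; apply: subset_itvl; rewrite bnd_simp.
Qed.

Lemma int_cos (c u v : R) : c != 0 -> u < v ->
  \int[mu]_(t in `[u, v[) cos (c * t) = (sin (c * v) - sin (c * u)) / c.
Proof.
move=> c0 uv.
have dF : forall x : R, is_derive x 1 (fun t => sin (c * t)) (cos (c * x) * c).
  move=> x.
  have -> : (fun t => sin (c * t)) = sin \o (fun t => c * t) by [].
  apply: is_derive1_comp.
  apply: (is_derive_eq (is_deriveZ c (@is_derive_id R R^o x 1))).
  by rewrite /= -[RHS]mulr1.
have cf : continuous (fun t : R => c * cos (c * t)).
  move=> x; apply: continuousM; first exact: cvg_cst.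
  apply: continuous_comp; last exact: continuous_cos.
  apply: continuousM; [exact: cvg_cst | exact: cvg_id].
have := @continuous_FTC2 R (fun t => c * cos (c * t)) (fun t => sin (c * t)) u v uv.
move=> /(_ (continuous_subspaceT cf)) H.
have dF2 : derivable_oo_LRcontinuous (fun t : R => sin (c * t)) u v.
  have cF : continuous (fun t : R => sin (c * t)).
    move=> x; apply: continuous_comp; last exact: continuous_sin.
    apply: continuousM; [exact: cvg_cst | exact: cvg_id].
  split.
  - by move=> x _; have [] := dF x.
  - exact: cvg_at_right_filter (cF u).
  - exact: cvg_at_left_filter (cF v).
have := H dF2 => {H}.
have dF3 : {in `]u, v[%R, (fun t : R => sin (c * t))^`() =1 (fun t : R => c * cos (c * t))}.
  by move=> x _; have := dF x; rewrite derive1E => ?; rewrite derive_val mulrC.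
move=> /(_ dF3) H.
have icc : mu.-integrable `[u, v] (EFin \o (fun t : R => c * cos (c * t))).
  by apply: continuous_compact_integrable; [exact: segment_compact | exact: continuous_subspaceT].
have ico : mu.-integrable `[u, v[ (EFin \o (fun t : R => c * cos (c * t))).
  by apply: integrableS icc => //; apply: subset_itvl; rewrite bnd_simp.
have : \int[mu]_(t in `[u, v[) (c * cos (c * t)) = sin (c * v) - sin (c * u).
  by rewrite Rintegral_itv_bndo_bndc // /Rintegral H.
rewrite RintegralZl //; last first.
  apply: cont_int_co => x; apply: continuous_comp; last exact: continuous_cos.
  apply: continuousM; [exact: cvg_cst | exact: cvg_id].
by move=> <-; rewrite mulrC mulrA mulVf // mul1r.
Qed.

Lemma int_sin (c u v : R) : c != 0 -> u < v ->
  \int[mu]_(t in `[u, v[) sin (c * t) = (cos (c * u) - cos (c * v)) / c.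
Proof.
move=> c0 uv.
have dF : forall x : R, is_derive x 1 (fun t => - cos (c * t)) (sin (c * x) * c).
  move=> x.
  have -> : (fun t => - cos (c * t)) = - (cos \o (fun t => c * t)) by [].
  apply: (is_derive_eq (is_deriveN _)).
  by rewrite mulNr opprK; congr (_ * _); exact: mulr1.
have cf : continuous (fun t : R => c * sin (c * t)).
  move=> x; apply: continuousM; first exact: cvg_cst.
  apply: continuous_comp; last exact: continuous_sin.
  apply: continuousM; [exact: cvg_cst | exact: cvg_id].
have := @continuous_FTC2 R (fun t => c * sin (c * t)) (fun t => - cos (c * t)) u v uv.
move=> /(_ (continuous_subspaceT cf)) H.
have dF2 : derivable_oo_LRcontinuous (fun t : R => - cos (c * t)) u v.
  have cF : continuous (fun t : R => - cos (c * t)).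
    move=> x; apply: continuousN; apply: continuous_comp; last exact: continuous_cos.
    apply: continuousM; [exact: cvg_cst | exact: cvg_id].
  split.
  - by move=> x _; have [] := dF x.
  - exact: cvg_at_right_filter (cF u).
  - exact: cvg_at_left_filter (cF v).
have := H dF2 => {H}.
have dF3 : {in `]u, v[%R, (fun t : R => - cos (c * t))^`() =1 (fun t : R => c * sin (c * t))}.
  by move=> x _; have := dF x; rewrite derive1E => ?; rewrite derive_val mulrC.
move=> /(_ dF3) H.
have icc : mu.-integrable `[u, v] (EFin \o (fun t : R => c * sin (c * t))).
  by apply: continuous_compact_integrable; [exact: segment_compact | exact: continuous_subspaceT].
have ico : mu.-integrable `[u, v[ (EFin \o (fun t : R => c * sin (c * t))).
  by apply: integrableS icc => //; apply: subset_itvl; rewrite bnd_simp.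
have : \int[mu]_(t in `[u, v[) (c * sin (c * t)) = cos (c * u) - cos (c * v).
  by rewrite Rintegral_itv_bndo_bndc // /Rintegral H -EFinB /= opprK addrC.
rewrite RintegralZl //; last first.
  apply: cont_int_co => x; apply: continuous_comp; last exact: continuous_sin.
  apply: continuousM; [exact: cvg_cst | exact: cvg_id].
by move=> <-; rewrite mulrC mulrA mulVf // mul1r.
Qed.
End Aux.
Section Key.
Local Open Scope classical_set_scope.
Variable R : realType.
Notation mu := (@lebesgue_measure R).

Lemma norm_Rint_le (g : R -> R) (u v M : R) : u <= v ->
  mu.-integrable `[u, v[ (EFin \o g) ->
  (forall t, u <= t < v -> `|g t| <= M) ->
  `| \int[mu]_(t in `[u, v[) g t | <= M * (v - u).
Proof.
move=> uv ig bg.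
have mD : measurable (`[u, v[ : set R) by [].
have icst : forall c : R, mu.-integrable `[u, v[ (EFin \o (fun=> c)).
  by move=> c; apply: cont_int_co => x; exact: cvg_cst.
have muD : fine (mu `[u, v[) = v - u.
  have := lebesgue_measure_itv `[u, v[%R; rewrite /= => ->.
  case: ifPn => /= [_|]; first by [].
  by rewrite lte_fin -leNgt => vu; apply/eqP; rewrite eq_sym subr_eq0 eq_le uv vu.
rewrite ler_norml; apply/andP; split.
- have := @le_Rintegral _ _ _ mu _ (fun=> - M) g mD (icst _) ig.
  rewrite Rintegral_cst // muD mulNr; apply => t; rewrite /= in_itv /= => /bg.
  by rewrite ler_norml => /andP[].
- have := @le_Rintegral _ _ _ mu _ g (fun=> M) mD ig (icst _).
  rewrite Rintegral_cst // muD; apply => t; rewrite /= in_itv /= => /bg.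
  by rewrite ler_norml => /andP[].
Qed.

Lemma pi2_gt0 : (0:R) < 2 * pi.
Proof. by apply: mulr_gt0 => //; exact: pi_gt0. Qed.

Definition hol (A : R -> R) (K a : R) :=
  forall t s, 0 <= t < 2 * pi -> 0 <= s < 2 * pi -> `|A t - A s| <= K * `|t - s| `^ a.

Lemma hol_meas A K a : 0 < a -> hol A K a -> measurable_fun `[0, 2 * pi[ A.
Proof.
move=> a0 hA; apply: subspace_continuous_measurable_fun => //.
apply: (@holder_cont _ _ _ K a a0) => t s.
by rewrite /= !in_itv /=; apply: hA.
Qed.

Lemma hol_bound A K a : 0 <= a -> 0 <= K -> hol A K a -> forall t, 0 <= t < 2 * pi ->
  `|A t| <= `|A 0| + K * (2 * pi) `^ a.
Proof.
move=> a0 K0 hA t tD.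
have D0 : (0:R) <= 0 < 2 * (pi : R) by rewrite lexx pi2_gt0.
have := hA t 0 tD D0; rewrite subr0 => h.
rewrite -[A t](subrK (A 0)); apply: (le_trans (ler_normD _ _)).
rewrite addrC lerD2l; apply: (le_trans h); apply: ler_wpM2l => //.
case/andP: tD => t0 t2; apply: ge0_ler_powR => //; rewrite ?nnegrE //.
- by rewrite ltW // pi2_gt0.
- by rewrite ger0_norm // ltW.
Qed.

Lemma cont_ncos (c : R) : continuous (fun t : R => cos (c * t)).
Proof.
move=> x; apply: continuous_comp; last exact: continuous_cos.
apply: continuousM; [exact: cvg_cst | exact: cvg_id].
Qed.

Lemma cont_nsin (c : R) : continuous (fun t : R => sin (c * t)).
Proof.
move=> x; apply: continuous_comp; last exact: continuous_sin.
apply: continuousM; [exact: cvg_cst | exact: cvg_id].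
Qed.

Lemma key (A B : R -> R) (K a : R) (n : nat) : 0 < a -> 0 <= K -> (0 < n)%N ->
  hol A K a -> hol B K a ->
  `| \int[mu]_(t in `[0, 2 * pi[) (cos (n%:R * t) * A t - sin (n%:R * t) * B t) |
    <= 2 * K * (2 * pi) * (2 * pi / n%:R) `^ a.
Proof.
move=> a0 K0 n0 hA hB.
set h := fun t => cos (n%:R * t) * A t - sin (n%:R * t) * B t.
set d := 2 * pi / n%:R.
have nR : (0:R) < n%:R by rewrite ltr0n.
have d0 : 0 < d by rewrite divr_gt0 ?pi2_gt0.
pose tk (k : nat) := k%:R * d.
have tkn : tk n = 2 * pi by rewrite /tk /d mulrCA mulfV ?gt_eqF // mulr1.
have tk_le : forall k m, (k <= m)%N -> tk k <= tk m.
  by move=> k m km; rewrite /tk ler_wpM2r ?ler_nat // ltW.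
have tkS : forall k, tk k.+1 = tk k + d.
  by move=> k; rewrite /tk -addn1 natrD mulrDl mul1r.
have tk0 : forall k, 0 <= tk k by move=> k; rewrite /tk mulr_ge0 // ltW.
have mh : measurable_fun `[0, 2 * pi[ h.
  apply: measurable_funB; apply: measurable_funM.
  - exact: measurable_funS (continuous_measurable_fun (cont_ncos _)).
  - exact: hol_meas hA.
  - exact: measurable_funS (continuous_measurable_fun (cont_nsin _)).
  - exact: hol_meas hB.
have ih : mu.-integrable `[0, 2 * pi[ (EFin \o h).
  apply: (@mb_int _ _ _ _ ((`|A 0| + K * (2 * pi) `^ a) + (`|B 0| + K * (2 * pi) `^ a))) => // t tD.
  rewrite /h; apply: (le_trans (ler_normB _ _)); apply: lerD; rewrite normrM.
  - apply: (le_trans (ler_wpM2r (normr_ge0 _) (cos_max _))).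
    by rewrite mul1r; exact: hol_bound (ltW a0) K0 hA t tD.
  - apply: (le_trans (ler_wpM2r (normr_ge0 _) (sin_max _))).
    by rewrite mul1r; exact: hol_bound (ltW a0) K0 hB t tD.
have dec : forall m, (m <= n)%N ->
    \int[mu]_(t in `[0, tk m[) h t = \sum_(k < m) \int[mu]_(t in `[tk k, tk k.+1[) h t.
  elim => [_|m IH mn].
  - rewrite big_ord0 /tk mul0r set_itv_ge ?Rintegral_set0 //.
    by rewrite bnd_simp ltxx.
  - rewrite big_ord_recr /= -IH ?(ltnW mn) //.
    have ii : mu.-integrable `[0, tk m.+1[ (EFin \o h).
      apply: integrableS ih => //; apply: subset_itv; rewrite bnd_simp ?lexx //.
      by rewrite -tkn tk_le.
    rewrite (@itv_bndbnd_setU _ _ _ (BLeft (tk m))) ?bnd_simp ?tk0 ?tk_le // in ii *.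
    rewrite Rintegral_setU //.
    apply/disj_setPS => x [] /=; rewrite !in_itv /= => /andP[_ x1] /andP[x2 _].
    by move: (lt_le_trans x1 x2); rewrite ltxx.
have ntk : forall j, n%:R * tk j = (pi *+ 2) *+ j.
  move=> j; rewrite /tk /d -mulr_natl -mulr_natl; field.
  by rewrite gt_eqF.
have sinj : forall j, sin (n%:R * tk j) = 0.
  by move=> j; rewrite ntk -[_ *+ j]add0r (periodicn (@sinD2pi R)) sin0.
have cosj : forall j, cos (n%:R * tk j) = 1.
  by move=> j; rewrite ntk -[_ *+ j]add0r (periodicn (@cosD2pi R)) cos0.
have piece : forall k, (k < n)%N ->
    `|\int[mu]_(t in `[tk k, tk k.+1[) h t| <= 2 * K * d `^ a * d.
  move=> k kn.
  have sub : `[tk k, tk k.+1[ `<=` `[0, 2 * pi[.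
    by apply: subset_itv; rewrite bnd_simp ?tk0 // -tkn tk_le.
  have ihk : mu.-integrable `[tk k, tk k.+1[ (EFin \o h) by apply: integrableS ih.
  pose c := fun t => A (tk k) * cos (n%:R * t) - B (tk k) * sin (n%:R * t).
  have ic : mu.-integrable `[tk k, tk k.+1[ (EFin \o c).
    apply: cont_int_co => x.
    apply: cvgB; apply: cvgM; (exact: cvg_cst || exact: cont_ncos || exact: cont_nsin).
  have kk : tk k < tk k.+1 by rewrite tkS ltrDl.
  have n0' : (n%:R : R) != 0 by rewrite gt_eqF.
  have c0 : \int[mu]_(t in `[tk k, tk k.+1[) c t = 0.
    rewrite /c RintegralB //; last 2 first.
    - apply: cont_int_co => x; apply: continuousM; [exact: cvg_cst | exact: cont_ncos].
    - apply: cont_int_co => x; apply: continuousM; [exact: cvg_cst | exact: cont_nsin].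
    rewrite !RintegralZl //; last 2 first.
    - exact: cont_int_co (cont_nsin _).
    - exact: cont_int_co (cont_ncos _).
    by rewrite int_cos // int_sin // !sinj !cosj !subrr !mul0r !mulr0 subrr.
  have -> : \int[mu]_(t in `[tk k, tk k.+1[) h t =
            \int[mu]_(t in `[tk k, tk k.+1[) (h t - c t).
    by rewrite [RHS]RintegralB // c0 subr0.
  have -> : d = tk k.+1 - tk k by rewrite tkS addrAC subrr add0r.
  apply: norm_Rint_le; first exact: ltW.
    apply: eq_integrable (integrableB _ ihk ic) => // x _ /=; rewrite EFinB.
  move=> t /andP[t1 t2].
  have tD : 0 <= t < 2 * pi.
    by rewrite (le_trans (tk0 k) t1) /= (lt_le_trans t2) // -tkn tk_le.
  have kD : 0 <= tk k < 2 * pi.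
    by rewrite tk0 /= (lt_le_trans kk) // -tkn tk_le.
  have -> : h t - c t = cos (n%:R * t) * (A t - A (tk k)) - sin (n%:R * t) * (B t - B (tk k)).
    by rewrite /h /c; ring.
  have pw : K * `|t - tk k| `^ a <= K * (tk k.+1 - tk k) `^ a.
    apply: ler_wpM2l => //; apply: ge0_ler_powR; rewrite ?nnegrE ?subr_ge0 //; first exact: ltW.
      exact: ltW.
    by rewrite ger0_norm ?subr_ge0 // lerD2r ltW.
  apply: (le_trans (ler_normB _ _)); rewrite !normrM.
  have e1 : `|cos (n%:R * t)| * `|A t - A (tk k)| <= K * (tk k.+1 - tk k) `^ a.
    apply: (le_trans (ler_wpM2r (normr_ge0 _) (cos_max _))); rewrite mul1r.
    exact: (le_trans (hA _ _ tD kD) pw).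
  have e2 : `|sin (n%:R * t)| * `|B t - B (tk k)| <= K * (tk k.+1 - tk k) `^ a.
    apply: (le_trans (ler_wpM2r (normr_ge0 _) (sin_max _))); rewrite mul1r.
    exact: (le_trans (hB _ _ tD kD) pw).
  by rewrite -mulrA mulr2n mulrDl mul1r lerD.
rewrite -tkn (dec n (leqnn n)).
apply: (le_trans (ler_norm_sum _ _ _)).
apply: (@le_trans _ _ (\sum_(k < n) (2 * K * d `^ a * d))).
  by apply: ler_sum => k _; exact: piece.
rewrite sumr_const card_ord tkn -/d.
have -> : 2 * pi = d * n%:R by rewrite /d mulfVK // gt_eqF.
rewrite -mulr_natr; lra.
Qed.
End Key.
Section Cx.
Local Open Scope complex_scope.
Variable R : realType.
Local Notation C := R[i].
Lemma cmodE (z : C) : cmod z = Num.sqrt (complex.Re z ^+ 2 + complex.Im z ^+ 2).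
Proof. by []. Qed.
Lemma ReM (z w : C) : complex.Re (z * w) = complex.Re z * complex.Re w - complex.Im z * complex.Im w.
Proof. by case: z => a b; case: w => c d. Qed.
Lemma ImM (z w : C) : complex.Im (z * w) = complex.Re z * complex.Im w + complex.Im z * complex.Re w.
Proof. by case: z => a b; case: w => c d. Qed.
Lemma ReD (z w : C) : complex.Re (z + w) = complex.Re z + complex.Re w.
Proof. by case: z => a b; case: w => c d. Qed.
Lemma ImD (z w : C) : complex.Im (z + w) = complex.Im z + complex.Im w.
Proof. by case: z => a b; case: w => c d. Qed.
Lemma ReN (z : C) : complex.Re (- z) = - complex.Re z.
Proof. by case: z. Qed.
Lemma ImN (z : C) : complex.Im (- z) = - complex.Im z.
Proof. by case: z. Qed.
Lemma ReJ (z : C) : complex.Re (conjc z) = complex.Re z.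
Proof. by case: z. Qed.
Lemma ImJ (z : C) : complex.Im (conjc z) = - complex.Im z.
Proof. by case: z. Qed.
Lemma cmod_normc (z : C) : cmod z = ComplexField.Normc.normc z.
Proof. by case: z. Qed.
Lemma cmod_ge0 (z : C) : 0 <= cmod z.
Proof. exact: sqrtr_ge0. Qed.
Lemma cmodM (z w : C) : cmod (z * w) = cmod z * cmod w.
Proof. by rewrite !cmod_normc ComplexField.Normc.normcM. Qed.
Lemma cmodD (z w : C) : cmod (z + w) <= cmod z + cmod w.
Proof. by rewrite !cmod_normc le_normcD. Qed.
Lemma cmodN (z : C) : cmod (- z) = cmod z.
Proof. by rewrite !cmod_normc normcN. Qed.
Lemma cmodB (z w : C) : cmod (z - w) <= cmod z + cmod w.
Proof. by rewrite -(cmodN w) cmodD. Qed.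
Lemma cmodJ (z : C) : cmod (conjc z) = cmod z.
Proof. by case: z => a b; rewrite /cmod /= sqrrN. Qed.
Lemma cmod_sqr (z : C) : cmod z ^+ 2 = complex.Re z ^+ 2 + complex.Im z ^+ 2.
Proof. by rewrite sqr_sqrtr // addr_ge0 // sqr_ge0. Qed.
Lemma Re_le (z : C) : `|complex.Re z| <= cmod z.
Proof.
rewrite -ler_sqr ?nnegrE ?cmod_ge0 //.
by rewrite cmod_sqr real_normK ?num_real // lerDl sqr_ge0.
Qed.
Lemma Im_le (z : C) : `|complex.Im z| <= cmod z.
Proof.
rewrite -ler_sqr ?nnegrE ?cmod_ge0 //.
by rewrite cmod_sqr real_normK ?num_real // lerDr sqr_ge0.
Qed.
Lemma cmod_cplx (a b : R) : cmod (a +i* b) <= `|a| + `|b|.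
Proof.
rewrite -ler_sqr ?nnegrE ?cmod_ge0 ?addr_ge0 //.
rewrite cmod_sqr /= sqrrD -(real_normK (num_real a)) -(real_normK (num_real b)).
by rewrite -addrA lerD2l lerDr mulrn_wge0 // mulr_ge0.
Qed.
End Cx.

Section IP.
Local Open Scope complex_scope.
Variable R : realType.
Local Notation C := R[i].
Variable H : lmodType C.
Variable ip : H -> H -> C.
Hypothesis hip : is_inner_product ip.

Lemma ip0r x : ip x 0 = 0.
Proof.
case: hip => l _ _ _.
have h := l x 0 0 1; rewrite scaler0 addr0 mul1r in h.
by apply: (@addrI _ (ip x 0)); rewrite addr0 -h.
Qed.
Lemma ipZDr x y z (a : C) : ip x (a *: y + z) = a * ip x y + ip x z.
Proof. by case: hip => l _ _ _; exact: l. Qed.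
Lemma ipZr x y (a : C) : ip x (a *: y) = a * ip x y.
Proof. by rewrite -[a *: y]addr0 ipZDr ip0r addr0. Qed.
Lemma ipDr x y z : ip x (y + z) = ip x y + ip x z.
Proof. by rewrite -[y in LHS]scale1r ipZDr mul1r. Qed.
Lemma ipC x y : ip y x = conjc (ip x y).
Proof. by case: hip => _ c _ _; exact: c. Qed.
Lemma ipZDl x y z (a : C) : ip (a *: y + z) x = conjc a * ip y x + ip z x.
Proof.
rewrite ipC ipZDr rmorphD rmorphM /= -!ipC //.
Qed.
Lemma ip0l x : ip 0 x = 0.
Proof. by rewrite ipC ip0r conjc0. Qed.
Lemma ipself x : ip x x = (complex.Re (ip x x)) +i* 0.
Proof.
case: hip => _ _ p _; have [i0 _] := p x.
by move: (ip x x) i0 => [a b] /= ->.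
Qed.
Lemma ipself_ge0 x : 0 <= complex.Re (ip x x).
Proof. by case: hip => _ _ p _; have [_ ] := p x. Qed.
Lemma ipself0 x : complex.Re (ip x x) = 0 -> x = 0.
Proof.
case: hip => _ _ _ d h; apply: d; rewrite ipself h //.
Qed.

Lemma CS x y : cmod (ip x y) <= hnorm ip x * hnorm ip y.
Proof.
rewrite /hnorm.
set a := complex.Re (ip x x); set b := complex.Re (ip y y).
have a0 : 0 <= a := ipself_ge0 x.
have b0 : 0 <= b := ipself_ge0 y.
have [bz|bpos] := eqVneq b 0.
  by rewrite (ipself0 y bz) ip0r /cmod /= expr0n /= addr0 sqrtr0 mulr_ge0 // sqrtr_ge0.
have bp : 0 < b by rewrite lt_neqAle eq_sym bpos b0.
have key : forall t : R, 0 <= t ^+ 2 * cmod (ip x y) ^+ 2 * b - 2 * t * cmod (ip x y) ^+ 2 + a.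
  move=> t.
  have := ipself_ge0 ((((- t) +i* 0) * conjc (ip x y)) *: y + x).
  rewrite ipZDl !ipZDr (ipC x y) (ipself x) (ipself y) -/a -/b cmod_sqr.
  case: (ip x y) => p1 p2 /=.
  move=> h; nra.
have := key (b^-1).
have -> : b^-1 ^+ 2 * cmod (ip x y) ^+ 2 * b - 2 * b^-1 * cmod (ip x y) ^+ 2 + a = a - cmod (ip x y) ^+ 2 / b.
  by field; rewrite gt_eqF.
rewrite subr_ge0 ler_pdivrMr // => hP.
rewrite -sqrtrM // -(ger0_norm (@cmod_ge0 R (ip x y))) -sqrtr_sqr.
exact: ler_wsqrtr hP.
Qed.

End IP.

Section Main.
Local Open Scope complex_scope.
Variable R : realType.
Local Notation C := R[i].

Lemma expi_circle (t : R) : unit_circle (expi t).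
Proof. by rewrite /unit_circle /= /cmod /= cos2Dsin2 sqrtr1. Qed.

Lemma expiX (t : R) (n : nat) : expi t ^+ n = expi (n%:R * t).
Proof.
elim: n => [|n IH]; first by rewrite expr0 mul0r /expi cos0 sin0.
rewrite exprS IH /expi -addn1 natrD mulrDl mul1r cosD sinD.
apply/eqP; rewrite eq_complex /=; apply/andP; split; apply/eqP; ring.
Qed.

Lemma Re_expiM (s : R) (w : C) :
  complex.Re (expi s * w) = cos s * complex.Re w - sin s * complex.Im w.
Proof. by rewrite ReM. Qed.
Lemma Im_expiM (s : R) (w : C) :
  complex.Im (expi s * w) = cos s * complex.Im w - sin s * - complex.Re w.
Proof. by rewrite ImM /=; ring. Qed.

Lemma invpowR (n a : R) : 0 < n -> (n^-1) `^ a = (n `^ a)^-1.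
Proof.
move=> n0; have p0 : n `^ a != 0 by rewrite gt_eqF // powR_gt0.
apply: (mulIf p0); rewrite mulVf // -powRM ?invr_ge0 ?(ltW n0) //.
by rewrite mulVf ?gt_eqF // powR1.
Qed.
End Main.

Lemma ipBr (R : realType) (H : lmodType R[i]) (ip : H -> H -> R[i]) : is_inner_product ip ->
  forall x y z, ip x (y - z) = ip x y - ip x z.
Proof.
move=> hip x y z; rewrite -scaleN1r addrC ipZDr // mulN1r addrC.
done.
Qed.

Theorem proposition2p9 (R : realType) (H : lmodType R[i]) (ip : H -> H -> R[i])
    (T Tstar : H -> H) (E : R[i] -> H) (alpha : R) (Rop : H -> H) :
  separable_inf_dim_hilbert ip ->
  bounded_linear ip T ->
  is_adjoint ip T Tstar ->
  T_eigenvector_field ip T E ->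
  0 < alpha <= 1 ->
  holderian ip E alpha ->
  is_KKstar ip E Rop ->
  exists CEa : R, 0 < CEa /\
    forall (x y : H) (n : nat), (0 < n)%N ->
      cmod (ip (Rop (iter n Tstar x)) y)
        <= CEa * hnorm ip x * hnorm ip y / (n%:R `^ alpha).
Proof.
move=> [hip _ _ _] _ hadj [[M hM] hEig] /andP[a0 a1] [CE [CE0 hCE]] [_ hR].
pose Mp := `|M| + 1.
have Mp0 : 0 < Mp by rewrite ltr_wpDl.
have hMp : forall l, unit_circle l -> hnorm ip (E l) <= Mp.
  move=> l hl; apply: (le_trans (hM l hl)); rewrite /Mp.
  by apply: (le_trans (ler_norm M)); rewrite lerDl.
exists (8 * Mp * CE * (2 * pi) `^ alpha); split.
  by rewrite !mulr_gt0 // ?powR_gt0 // ?pi2_gt0.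
move=> x y n n0.
have ipZl : forall (a : R[i]) u w, ip (a *: u) w = conjc a * ip u w.
  by move=> a u w; rewrite -[a *: u]addr0 (@ipZDl R H ip hip) (@ip0l R H ip hip) addr0.
have hit : forall m w l, unit_circle l -> ip (iter m Tstar w) (E l) = l ^+ m * ip w (E l).
  move=> m w l hl; elim: m => [|m IH]; first by rewrite expr0 mul1r.
  rewrite iterS exprS -mulrA -IH (@ipC R H ip hip) -hadj (hEig l hl) ipZl rmorphM /= conjcK.
  by rewrite -(@ipC R H ip hip).
pose G t := ip x (E (expi t)) * conjc (ip y (E (expi t))).
have hRe : forall t : R, complex.Re (ip (iter n Tstar x) (E (expi t)) * conjc (ip y (E (expi t)))) =
    cos (n%:R * t) * complex.Re (G t) - sin (n%:R * t) * complex.Im (G t).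
  by move=> t; rewrite hit; [rewrite expiX -mulrA Re_expiM | exact: expi_circle].
have hIm : forall t : R, complex.Im (ip (iter n Tstar x) (E (expi t)) * conjc (ip y (E (expi t)))) =
    cos (n%:R * t) * complex.Im (G t) - sin (n%:R * t) * - complex.Re (G t).
  by move=> t; rewrite hit; [rewrite expiX -mulrA Im_expiM | exact: expi_circle].
set K := 2 * Mp * CE * hnorm ip x * hnorm ip y.
have hx0 : 0 <= hnorm ip x by exact: sqrtr_ge0.
have hy0 : 0 <= hnorm ip y by exact: sqrtr_ge0.
have K0 : 0 <= K by rewrite /K !mulr_ge0 // ltW.
have hG : forall t s : R, 0 <= t < 2 * pi -> 0 <= s < 2 * pi ->
    cmod (G t - G s) <= K * `|t - s| `^ alpha.
  move=> t s ht hs.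
  have hut : forall r, cmod (ip x (E (expi r))) <= hnorm ip x * Mp.
    move=> r; apply: (le_trans (@CS R H ip hip _ _)).
    apply: ler_wpM2l => //. apply: hMp. exact: expi_circle.
  have hvt : forall r, cmod (ip y (E (expi r))) <= hnorm ip y * Mp.
    move=> r; apply: (le_trans (@CS R H ip hip _ _)).
    apply: ler_wpM2l => //. apply: hMp. exact: expi_circle.
  have hdx : cmod (ip x (E (expi t)) - ip x (E (expi s))) <= hnorm ip x * (CE * `|t - s| `^ alpha).
    rewrite -(@ipBr R H ip hip); apply: (le_trans (@CS R H ip hip _ _)).
    apply: ler_wpM2l => //. exact: hCE.
  have hdy : cmod (ip y (E (expi t)) - ip y (E (expi s))) <= hnorm ip y * (CE * `|t - s| `^ alpha).
    rewrite -(@ipBr R H ip hip); apply: (le_trans (@CS R H ip hip _ _)).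
    apply: ler_wpM2l => //. exact: hCE.
  have -> : G t - G s = (ip x (E (expi t)) - ip x (E (expi s))) * conjc (ip y (E (expi t)))
      + ip x (E (expi s)) * conjc (ip y (E (expi t)) - ip y (E (expi s))).
    by rewrite /G rmorphB /=; ring.
  apply: (le_trans (@cmodD R _ _)); rewrite !cmodM !cmodJ.
  apply: (le_trans (lerD (ler_pM (@cmod_ge0 R _) (@cmod_ge0 R _) hdx (hvt t))
                         (ler_pM (@cmod_ge0 R _) (@cmod_ge0 R _) (hut s) hdy))).
  by rewrite le_eqVlt; apply/orP; left; apply/eqP; rewrite /K; ring.
have hA : @hol R (fun t => complex.Re (G t)) K alpha.
  move=> t s ht hs; apply: (le_trans _ (hG t s ht hs)).
  by have := @Re_le R (G t - G s); rewrite ReD ReN.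
have hB : @hol R (fun t => complex.Im (G t)) K alpha.
  move=> t s ht hs; apply: (le_trans _ (hG t s ht hs)).
  by have := @Im_le R (G t - G s); rewrite ImD ImN.
have hNA : @hol R (fun t => - complex.Re (G t)) K alpha.
  by move=> t s ht hs; rewrite -opprD normrN; exact: hA.
rewrite hR /circle_integral.
under eq_Rintegral do rewrite hRe.
under [X in Complex _ (_ * X)]eq_Rintegral do rewrite hIm.
apply: (le_trans (@cmod_cplx R _ _)).
have k1 := @key R _ _ _ _ _ a0 K0 n0 hA hB.
have k2 := @key R _ _ _ _ _ a0 K0 n0 hB hNA.
have pi0 : 0 < 2 * pi :> R by exact: pi2_gt0.
have ipi0 : 0 <= (2 * pi :> R)^-1 by rewrite invr_ge0 ltW.
rewrite !normrM (ger0_norm ipi0).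
apply: (le_trans (lerD (ler_wpM2l ipi0 k1) (ler_wpM2l ipi0 k2))).
have nR : 0 < n%:R :> R by rewrite ltr0n.
rewrite powRM ?invr_ge0 ?(ltW nR) ?(ltW pi0) // invpowR //.
have na : n%:R `^ alpha != 0 :> R by rewrite gt_eqF // powR_gt0.
have pn : (pi : R) != 0 by rewrite gt_eqF // pi_gt0.
rewrite le_eqVlt; apply/orP; left; apply/eqP; rewrite /K.
move: pn; generalize (@pi R) => p pn; field.
by rewrite na pn.
Qed.
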